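(* Under (B.1), (B.2), (B.3), the minimax solution $\varphi$ of the problem $\partial_t\varphi+H(t,x(\cdot),\nabla\varphi)=0$ on $[0,T)\times C([-h,T],\mathbb{R}^n)$, $\varphi(T,x(\cdot))=\sigma(x(\cdot))$, is a viscosity solution, i.e. it satisfies: (V$^*$) for every $ci$-smooth $\psi:[0,T]\times C([-h,T],\mathbb{R}^n)\to\mathbb{R}$, if $\varphi-\psi$ attains a local minimum (with respect to the metric $\mathrm{dist}$) at a point $(t,x(\cdot))\in[0,T)\times C([-h,T],\mathbb{R}^n)$, then $\partial_t\psi(t,x(\cdot))+H(t,x(\cdot),\nabla\psi(t,x(\cdot)))\le0$; (V$_*$) for every $ci$-smooth $\psi$, if $\varphi-\psi$ attains a local maximum at a point $(t,x(\cdot))\in[0,T)\times C([-h,T],\mathbb{R}^n)$, then $\partial_t\psi(t,x(\cdot))+H(t,x(\cdot),\nabla\psi(t,x(\cdot)))\ge0$.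
   Context: Fix $n\in\mathbb{N}$, $h>0$, $T>0$; $\langle\cdot,\cdot\rangle$, $\|\cdot\|$ Euclidean. $C([-h,T],\mathbb{R}^n)$ has the sup norm $\|\cdot\|_{[-h,T]}$; $[0,T]\times C([-h,T],\mathbb{R}^n)$ has the metric $\mathrm{dist}((t,x(\cdot)),(\tau,y(\cdot)))=|t-\tau|+\|x(\cdot)-y(\cdot)\|_{[-h,T]}$. Non-anticipative: $\varphi(t,x(\cdot))=\varphi(t,y(\cdot))$ whenever $t\in[0,T)$ and $x=y$ on $[-h,t]$. $\mathrm{Lip}(t,x(\cdot))$: the $y(\cdot)\in C([-h,T],\mathbb{R}^n)$ with $y=x$ on $[-h,t]$, Lipschitz on $[t,T]$. $ci$-differentiable at $(t,x(\cdot))$, $t<T$: there exist $\partial_t\varphi(t,x(\cdot))\in\mathbb{R}$, $\nabla\varphi(t,x(\cdot))\in\mathbb{R}^n$ with $\varphi(\tau,y(\cdot))-\varphi(t,x(\cdot))=\partial_t\varphi(t,x(\cdot))(\tau-t)+\langle\nabla\varphi(t,x(\cdot)),y(\tau)-x(t)\rangle+o(\tau-t)$, $\tau\in(t,T]$, for every $y(\cdot)\in\mathrm{Lip}(t,x(\cdot))$, $o(\delta)/\delta\to0$ as $\delta\downarrow0$ ($o$ may depend on $y$). $ci$-smooth: continuous, $ci$-differentiable at every point of $[0,T)\times C([-h,T],\mathbb{R}^n)$, with $\partial_t\varphi$ and $\nabla\varphi$ continuous there. (B.1) $H,\sigma$ continuous; (B.2) there is $c>0$ with $|H(t,x(\cdot),s)-H(t,x(\cdot),r)|\le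 c(1+\max_{\tau\in[-h,t]}\|x(\tau)\|)\|s-r\|$ for all $t,x(\cdot),s,r$; (B.3) for every compact $D\subset C([-h,T],\mathbb{R}^n)$ there is $\lambda>0$ with $|H(t,x(\cdot),s)-H(t,y(\cdot),s)|\le\lambda(1+\|s\|)\max_{\tau\in[-h,t]}\|x(\tau)-y(\tau)\|$ for all $t\in[0,T]$, $x(\cdot),y(\cdot)\in D$, $s$. $Y(t,x(\cdot))$: the $y(\cdot)\in\mathrm{Lip}(t,x(\cdot))$ with $\|\dot y(\tau)\|\le c(1+\max_{\xi\in[-h,\tau]}\|y(\xi)\|)$ for a.e. $\tau\in[t,T]$. A minimax solution: $\varphi$ non-anticipative, continuous, $\varphi(T,\cdot)=\sigma$, and for every $(t,x(\cdot))\in[0,T)\times C([-h,T],\mathbb{R}^n)$, $s\in\mathbb{R}^n$ there is $y(\cdot)\in Y(t,x(\cdot))$ with $\varphi(\tau,y(\cdot))-\varphi(t,x(\cdot))=\langle s,y(\tau)-x(t)\rangle-\int_t^\tau H(\xi,y(\cdot),s)\,d\xi$ for all $\tau\in[t,T]$. *)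

(* Defs.v *)
From HB Require Import structures.
From mathcomp Require Import all_boot all_order all_algebra.
From mathcomp Require Import all_classical all_reals all_analysis.
From Stdlib Require List.
Set Implicit Arguments. Unset Strict Implicit. Unset Printing Implicit Defensive.
Import Order.TTheory GRing.Theory Num.Theory.
Import numFieldNormedType.Exports.
Local Open Scope classical_set_scope.
Local Open Scope ring_scope.

Section PathDefs.
Variables (R : realType) (n : nat) (h T : R).

Definition inner (u v : 'rV[R]_n) : R := \sum_(i < n) u ord0 i * v ord0 i.
Definition enorm (v : 'rV[R]_n) : R := Num.sqrt (inner v v).

(* Elements of C([-h,T],R^n) are represented by functions R -> R^n that are
   continuous on [-h,T] and constant outside of it (x s = x (clamp s)),
   so that they are in bijection with C([-h,T],R^n). *)
Definition clamp (s : R) : R := Num.max (- h) (Num.min s T).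

Definition admissible (x : R -> 'rV[R]_n) : Prop :=
  (forall s, x s = x (clamp s)) /\
  (forall s, - h <= s <= T -> forall e, 0 < e -> exists2 d, 0 < d &
     forall s', - h <= s' <= T -> `|s' - s| < d -> enorm (x s' - x s) < e).

Definition supdist (x y : R -> 'rV[R]_n) : R :=
  sup [set enorm (x s - y s) | s in [set s | - h <= s <= T]].

Definition dist (t : R) (x : R -> 'rV[R]_n) (tau : R) (y : R -> 'rV[R]_n) : R :=
  `|t - tau| + supdist x y.

Definition maxnorm_upto (x : R -> 'rV[R]_n) (t : R) : R :=
  sup [set enorm (x s) | s in [set s | - h <= s <= t]].

Definition maxdist_upto (x y : R -> 'rV[R]_n) (t : R) : R :=
  sup [set enorm (x s - y s) | s in [set s | - h <= s <= t]].

Definition cont_functional (phi : R -> (R -> 'rV[R]_n) -> R) : Prop :=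
  forall t x, 0 <= t <= T -> admissible x ->
  forall e, 0 < e -> exists2 d, 0 < d &
    forall tau y, 0 <= tau <= T -> admissible y -> dist t x tau y < d ->
      `|phi tau y - phi t x| < e.

Definition cont_functional_open (phi : R -> (R -> 'rV[R]_n) -> R) : Prop :=
  forall t x, 0 <= t < T -> admissible x ->
  forall e, 0 < e -> exists2 d, 0 < d &
    forall tau y, 0 <= tau < T -> admissible y -> dist t x tau y < d ->
      `|phi tau y - phi t x| < e.

Definition cont_functional_vec_open (g : R -> (R -> 'rV[R]_n) -> 'rV[R]_n) : Prop :=
  forall t x, 0 <= t < T -> admissible x ->
  forall e, 0 < e -> exists2 d, 0 < d &
    forall tau y, 0 <= tau < T -> admissible y -> dist t x tau y < d ->
      enorm (g tau y - g t x) < e.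

Definition non_anticipative (phi : R -> (R -> 'rV[R]_n) -> R) : Prop :=
  forall t x y, 0 <= t < T -> admissible x -> admissible y ->
    (forall s, - h <= s <= t -> x s = y s) -> phi t x = phi t y.

Definition Lip (t : R) (x y : R -> 'rV[R]_n) : Prop :=
  admissible y /\ (forall s, - h <= s <= t -> y s = x s) /\
  exists L : R, forall s1 s2, t <= s1 <= T -> t <= s2 <= T ->
    enorm (y s1 - y s2) <= L * `|s1 - s2|.

Definition ci_diff_at (psi : R -> (R -> 'rV[R]_n) -> R) (t : R)
    (x : R -> 'rV[R]_n) (dt : R) (g : 'rV[R]_n) : Prop :=
  forall y, Lip t x y ->
  forall e, 0 < e -> exists2 d, 0 < d &
    forall tau, t < tau <= T -> tau - t < d ->
      `|psi tau y - psi t x - dt * (tau - t) - inner g (y tau - x t)|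
        <= e * (tau - t).

Definition ci_smooth (psi : R -> (R -> 'rV[R]_n) -> R)
    (dt_psi : R -> (R -> 'rV[R]_n) -> R)
    (grad_psi : R -> (R -> 'rV[R]_n) -> 'rV[R]_n) : Prop :=
  cont_functional psi /\
  (forall t x, 0 <= t < T -> admissible x ->
     ci_diff_at psi t x (dt_psi t x) (grad_psi t x)) /\
  cont_functional_open dt_psi /\ cont_functional_vec_open grad_psi.

Definition Yset (c : R) (t : R) (x y : R -> 'rV[R]_n) : Prop :=
  Lip t x y /\
  exists N : set R, (@lebesgue_measure R).-negligible N /\
    forall tau, t <= tau <= T -> ~ N tau ->
      derivable y tau 1 /\
      enorm ('D_1 y tau) <= c * (1 + maxnorm_upto y tau).

Definition openC (U : set (R -> 'rV[R]_n)) : Prop :=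
  forall x, admissible x -> U x -> exists2 r, 0 < r &
    forall y, admissible y -> supdist x y < r -> U y.

Definition compactC (D : set (R -> 'rV[R]_n)) : Prop :=
  (forall x, D x -> admissible x) /\
  forall (I : Type) (U : I -> set (R -> 'rV[R]_n)),
    (forall i, openC (U i)) -> (forall x, D x -> exists i, U i x) ->
    exists s : seq I, forall x, D x -> exists i, List.In i s /\ U i x.

Definition B1 (H : R -> (R -> 'rV[R]_n) -> 'rV[R]_n -> R)
    (sigma : (R -> 'rV[R]_n) -> R) : Prop :=
  (forall t x s, 0 <= t <= T -> admissible x ->
    forall e, 0 < e -> exists2 d, 0 < d &
      forall tau y r, 0 <= tau <= T -> admissible y ->
        dist t x tau y + enorm (r - s) < d -> `|H tau y r - H t x s| < e) /\
  (forall x, admissible x -> forall e, 0 < e -> exists2 d, 0 < d &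
      forall y, admissible y -> supdist x y < d -> `|sigma y - sigma x| < e).

Definition B2 (c : R) (H : R -> (R -> 'rV[R]_n) -> 'rV[R]_n -> R) : Prop :=
  forall t x s r, 0 <= t <= T -> admissible x ->
    `|H t x s - H t x r| <= c * (1 + maxnorm_upto x t) * enorm (s - r).

Definition B3 (H : R -> (R -> 'rV[R]_n) -> 'rV[R]_n -> R) : Prop :=
  forall D, compactC D -> exists2 lam, 0 < lam &
    forall t x y s, 0 <= t <= T -> D x -> D y ->
      `|H t x s - H t y s| <= lam * (1 + enorm s) * maxdist_upto x y t.

Definition minimax_solution (c : R) (H : R -> (R -> 'rV[R]_n) -> 'rV[R]_n -> R)
    (sigma : (R -> 'rV[R]_n) -> R) (phi : R -> (R -> 'rV[R]_n) -> R) : Prop :=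
  non_anticipative phi /\ cont_functional phi /\
  (forall x, admissible x -> phi T x = sigma x) /\
  (forall t x s, 0 <= t < T -> admissible x ->
    exists y, Yset c t x y /\
      forall tau, t <= tau <= T ->
        phi tau y - phi t x =
          inner s (y tau - x t) - Rintegral (@lebesgue_measure R)
                                     [set xi | t <= xi <= tau] (fun xi => H xi y s)).

Definition local_min_at (f : R -> (R -> 'rV[R]_n) -> R) (t : R) (x : R -> 'rV[R]_n) :=
  exists2 d, 0 < d & forall tau y, 0 <= tau <= T -> admissible y ->
    dist t x tau y < d -> f t x <= f tau y.

Definition local_max_at (f : R -> (R -> 'rV[R]_n) -> R) (t : R) (x : R -> 'rV[R]_n) :=
  exists2 d, 0 < d & forall tau y, 0 <= tau <= T -> admissible y ->
    dist t x tau y < d -> f tau y <= f t x.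

End PathDefs.

(* Main.v *)
Require Import Defs.
From mathcomp Require Import all_boot all_order all_algebra.
From mathcomp Require Import all_classical all_reals all_analysis.
From mathcomp Require Import ring lra.
Import Order.TTheory GRing.Theory Num.Theory.
Import numFieldNormedType.Exports.
Local Open Scope classical_set_scope.
Local Open Scope ring_scope.

Section Util.
Variable R : realType.
Lemma setcc (t tau : R) : [set xi | t <= xi <= tau] = `[t, tau]%classic.
Proof. by apply/seteqP; split => x /=; rewrite in_itv. Qed.

Lemma int_bound (f : R -> R) (t tau K e : R) : t <= tau -> continuous f ->
  (forall xi, t <= xi <= tau -> `|f xi - K| <= e) ->
  `|Rintegral (@lebesgue_measure R) [set xi | t <= xi <= tau] f - K * (tau - t)|
   <= e * (tau - t).
Proof.
move=> tt cf hb; rewrite setcc.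
have mD : measurable (`[t, tau]%classic : set R) by exact: measurable_itv.
have cint : forall g : R -> R, continuous g ->
   (@lebesgue_measure R).-integrable `[t, tau]%classic (EFin \o g).
  move=> g cg; apply: continuous_compact_integrable; first exact: segment_compact.
  exact: continuous_subspaceT.
have muD : fine ((@lebesgue_measure R) `[t, tau]%classic) = tau - t.
  rewrite lebesgue_measure_itv /=.
  case: ltP => [_|]; first by rewrite -EFinD.
  rewrite lee_fin => ht; apply/eqP; rewrite eq_sym subr_eq0 eq_le ht tt //.
have ccst : forall k : R, continuous (fun _ : R => k) by move=> k; exact: cst_continuous.
rewrite -muD -Rintegral_cst // -RintegralB //; last exact: cint.
apply: le_trans (le_normr_Rintegral _ _) _ => //.
  apply: cint => x; exact: (continuousB (cf x) (ccst K x)).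
rewrite -Rintegral_cst //; apply: le_Rintegral => //.
- apply: cint => x; apply: (continuous_comp (f := fun x => f x - K)); last exact: norm_continuous.
  exact: (continuousB (cf x) (ccst K x)).
- exact: cint.
- exact: cint.
Qed.
Lemma minr_lip (a b c : R) : `|Num.min a c - Num.min b c| <= `|a - b|.
Proof.
have h1 := ler_norm (a - b); have h2 := ler_norm (b - a); rewrite distrC in h2.
rewrite ler_norml /Num.min.
case: (ltP a c) => ?; case: (ltP b c) => ?; apply/andP; split; lra.
Qed.
Lemma maxr_lip (a b c : R) : `|Num.max c a - Num.max c b| <= `|a - b|.
Proof.
have h1 := ler_norm (a - b); have h2 := ler_norm (b - a); rewrite distrC in h2.
rewrite ler_norml /Num.max.
case: (ltP c a) => ?; case: (ltP c b) => ?; apply/andP; split; lra.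
Qed.
Lemma minrl [x y : R] : x <= y -> Num.min x y = x. Proof. exact: min_l. Qed.
Lemma minrr [x y : R] : y <= x -> Num.min x y = y. Proof. exact: min_r. Qed.
Lemma maxrl [x y : R] : y <= x -> Num.max x y = x. Proof. exact: max_l. Qed.
Lemma maxrr [x y : R] : x <= y -> Num.max x y = y. Proof. exact: max_r. Qed.
Lemma clamp_min (h T tau s : R) : - h <= tau <= T ->
  Num.max (- h) (Num.min (Num.min s tau) T) =
  Num.max (- h) (Num.min (Num.min (Num.max (- h) (Num.min s T)) tau) T).
Proof.
move=> /andP[h1 h2]; rewrite !minEle !maxEle.
repeat match goal with |- context [if ?c then _ else _] =>
  lazymatch c with context [if _ then _ else _] => fail | _ =>
  let Hc := fresh "Hc" in
  case: (boolP c) => Hc; [idtac | move: Hc; rewrite -ltNge => Hc] end end.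
all: lra.
Qed.
Lemma cont_eps (F : R -> R) :
  (forall x e, 0 < e -> exists2 d, 0 < d & forall y, `|y - x| < d -> `|F y - F x| < e) ->
  continuous F.
Proof.
move=> H x; apply/cvgrPdist_lt => e e0; have [d d0 hd] := H x e e0.
apply/nbhs_ballP; exists d => // y /= hy.
by rewrite distrC; apply: hd; rewrite distrC; exact: hy.
Qed.
Lemma zm1 n (a b c d e f : 'rV[R]_n) :
  a + (c - e) - (b + (d - f)) = (a - b) + ((c - d) - (e - f)).
Proof. by apply/rowP => i; rewrite !mxE; ring. Qed.
Lemma small_pos (l : seq R) : (forall d, d \in l -> 0 < d) ->
  exists2 r, 0 < r & forall d, d \in l -> r < d.
Proof.
elim: l => [|d l IH] H; first by exists 1 => //.
have [r r0 hr] : exists2 r, 0 < r & forall d, d \in l -> r < d.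
  by apply: IH => d' hd'; apply: H; rewrite in_cons hd' orbT.
have d0 : 0 < d by apply: H; rewrite mem_head.
have [hd|] := boolP (d <= r); last rewrite -ltNge => hd.
  exists (d / 2); first lra.
  move=> d'; rewrite in_cons => /orP[/eqP ->|/hr]; lra.
exists r => // d'; rewrite in_cons => /orP[/eqP ->|/hr] //.
Qed.
Lemma min_in (a b s tau : R) : a <= s <= b -> a <= tau <= b -> a <= Num.min s tau <= b.
Proof. rewrite minEle; case: ifP => _; by []. Qed.
Lemma min_eq (s tau : R) : s <= tau -> Num.min s tau = s.
Proof. by move=> hs; rewrite minEle hs. Qed.
Lemma min_gt (s tau t : R) : t < Num.min s tau -> Num.min s tau <= tau.
Proof. rewrite minEle; case: ifP => ? ?; lra. Qed.
Lemma min_ge (s tau : R) : Num.min s tau <= tau.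
Proof. rewrite minEle; case: ifP => ?; lra. Qed.

End Util.
Lemma conclude_le {R : realType} (D K e w : R) : 0 < w -> 0 <= D -> `|D + K * w| <= e * w -> K <= 0 + e.
Proof.
move=> w0 D0; rewrite ler_norml add0r => /andP[_ h1].
have : K * w <= e * w by lra.
by rewrite ler_pM2r.
Qed.
Lemma conclude_ge {R : realType} (D K e w : R) : 0 < w -> D <= 0 -> `|D + K * w| <= e * w -> 0 <= K + e.
Proof.
move=> w0 D0; rewrite ler_norml => /andP[h1 _].
have : (- e) * w <= K * w by lra.
rewrite ler_pM2r // => h; lra.
Qed.

Lemma final_alg {R : realType} (py px qy qx a Hy IN IY e w : R) : py - px = IN - IY ->
  `|qy - qx - a * w - IN| <= e / 2 * w -> `|IY - Hy * w| <= e / 2 * w ->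
  `|py - qy - (px - qx) + (a + Hy) * w| <= e * w.
Proof.
move=> E P I.
have -> : py - qy - (px - qx) + (a + Hy) * w = - (qy - qx - a * w - IN) - (IY - Hy * w).
  by rewrite -[py](subrK px) E; ring.
apply: (le_trans (ler_normB _ _)); rewrite normrN.
have -> : e * w = e / 2 * w + e / 2 * w by field.
exact: lerD.
Qed.

Arguments small_pos {R}.
Arguments int_bound {R}.
Arguments min_in {R}.
Arguments min_eq {R}.
Arguments min_ge {R}.
Arguments minr_lip {R}.
Arguments maxr_lip {R}.
Arguments clamp_min {R}.
Arguments cont_eps {R}.
Arguments zm1 {R n}.

Section Norms.
Variables (R : realType) (n : nat).
Implicit Types u v : 'rV[R]_n.
Lemma sum_ge_term (F : 'I_n -> R) (i : 'I_n) :
  (forall j, 0 <= F j) -> F i <= \sum_(j < n) F j.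
Proof.
move=> F0; rewrite (bigD1 i) //= lerDl; apply: sumr_ge0 => j _; exact: F0.
Qed.

Lemma inner_self v : inner v v = \sum_(i < n) (v ord0 i) ^+ 2.
Proof. by apply: eq_bigr => i _; rewrite expr2. Qed.

Lemma enorm_ge0 v : 0 <= enorm v.
Proof. exact: sqrtr_ge0. Qed.

Lemma enorm0 : enorm (0 : 'rV[R]_n) = 0.
Proof.
rewrite /enorm /inner big1 ?sqrtr0 // => i _; by rewrite mxE mulr0.
Qed.

Lemma enormN v : enorm (- v) = enorm v.
Proof.
rewrite /enorm /inner; congr Num.sqrt; apply: eq_bigr => i _.
by rewrite !mxE mulrNN.
Qed.

Lemma coord_le v i : `|v ord0 i| <= enorm v.
Proof.
rewrite -sqrtr_sqr /enorm ler_sqrt; last first.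
  by rewrite inner_self; apply: sumr_ge0 => j _; exact: sqr_ge0.
rewrite inner_self; apply: (sum_ge_term (fun j => v ord0 j ^+ 2)) => j.
exact: sqr_ge0.
Qed.

Lemma enorm_le_sum v : enorm v <= \sum_(i < n) `|v ord0 i|.
Proof.
set S := \sum_(i < n) `|v ord0 i|.
have S0 : 0 <= S by apply: sumr_ge0.
rewrite -(ger0_norm S0) -sqrtr_sqr /enorm ler_sqrt; last exact: sqr_ge0.
rewrite inner_self expr2 {2}/S mulr_sumr; apply: ler_sum => i _.
have -> : v ord0 i ^+ 2 = `|v ord0 i| * `|v ord0 i| by rewrite -normrM -expr2 ger0_norm ?sqr_ge0.
rewrite ler_wpM2r //.
exact: (sum_ge_term (fun j => `|v ord0 j|)).
Qed.

Lemma enormD u v : enorm (u + v) <= n%:R * (enorm u + enorm v).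
Proof.
apply: (le_trans (enorm_le_sum _)).
have -> : n%:R * (enorm u + enorm v) = \sum_(i < n) (enorm u + enorm v).
  by rewrite sumr_const card_ord mulr_natl.
apply: ler_sum => i _; rewrite mxE; apply: (le_trans (ler_normD _ _)).
by apply: lerD; apply: coord_le.
Qed.

Lemma enormB u v : enorm (u - v) <= n%:R * (enorm u + enorm v).
Proof. by rewrite -(enormN v); apply: enormD. Qed.

Lemma inner_le g v : `|inner g v| <= (\sum_(i < n) `|g ord0 i|) * enorm v.
Proof.
rewrite /inner mulr_suml; apply: (le_trans (ler_norm_sum _ _ _)).
apply: ler_sum => i _; rewrite normrM ler_wpM2l //; exact: coord_le.
Qed.

Lemma innerB g u v : inner g (u - v) = inner g u - inner g v.
Proof.
rewrite /inner -sumrB; apply: eq_bigr => i _; by rewrite !mxE mulrBr.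
Qed.

End Norms.
Arguments sum_ge_term {R n}.
Arguments inner_self {R n}.
Arguments enorm_ge0 {R n}.
Arguments coord_le {R n}.
Arguments enorm_le_sum {R n}.
Arguments enormD {R n}.
Arguments enormB {R n}.
Arguments inner_le {R n}.
Arguments innerB {R n}.
Arguments enormN {R n}.
Arguments enorm0 {R n}.

Section Main.
Variables (R : realType) (n : nat) (h T : R).
Hypotheses (h0 : 0 < h) (T0 : 0 < T).

Lemma sup_le_img (F : R -> R) (a b B : R) : a <= b ->
  (forall s, a <= s <= b -> F s <= B) ->
  sup [set F s | s in [set s | a <= s <= b]] <= B.
Proof.
move=> ab hb; apply: ge_sup.
  by exists (F a), a => //=; rewrite lexx ab.
by move=> _ [s hs <-]; exact: hb.
Qed.

Lemma sup_img0 (F : R -> R) (a b : R) : a <= b ->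
  (forall s, a <= s <= b -> F s = 0) ->
  sup [set F s | s in [set s | a <= s <= b]] = 0.
Proof.
move=> ab hb.
have -> : [set F s | s in [set s | a <= s <= b]] = [set 0].
  apply/seteqP; split.
    by move=> _ [s hs <-]; rewrite /= hb.
  by move=> _ ->; exists a => //=; [rewrite lexx ab | rewrite hb ?lexx ?ab].
exact: sup1.
Qed.

Lemma supdist_self (y : R -> 'rV[R]_n) : supdist h T y y = 0.
Proof.
rewrite /supdist; apply: (sup_img0 (fun s => enorm (y s - y s))).
  by apply/ltW/(lt_trans _ T0); rewrite oppr_lt0.
by move=> s _; rewrite subrr enorm0.
Qed.

Lemma right_lim_unique (u : R -> R) (a b l1 l2 : R) : a < b ->
  (forall e, 0 < e -> exists2 d, 0 < d & forall s, a < s <= b -> s - a < d -> `|u s - l1| <= e) ->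
  (forall e, 0 < e -> exists2 d, 0 < d & forall s, a < s <= b -> s - a < d -> `|u s - l2| <= e) ->
  l1 = l2.
Proof.
move=> ab H1 H2; apply/eqP; rewrite -subr_eq0 -normr_le0.
apply/ler_addgt0Pr => e e0.
have [d1 d10 hd1] := H1 (e / 2) ltac:(lra).
have [d2 d20 hd2] := H2 (e / 2) ltac:(lra).
have [r r0 hr] := small_pos [:: d1; d2; b - a]
  ltac:(move=> d; rewrite !inE => /orP[/eqP->|/orP[/eqP->|/eqP->]]; lra).
have r1 := hr d1 ltac:(by rewrite !inE eqxx).
have r2 := hr d2 ltac:(by rewrite !inE eqxx orbT).
have r3 := hr (b - a) ltac:(by rewrite !inE eqxx !orbT).
have hs : a < a + r <= b by apply/andP; split; lra.
have := hd1 _ hs ltac:(lra); have := hd2 _ hs ltac:(lra).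
have -> : l1 - l2 = (u (a + r) - l2) - (u (a + r) - l1) by ring.
move=> q1 q2; apply: (le_trans (ler_normB _ _)); lra.
Qed.


Lemma psi_na (psi dt : R -> (R -> 'rV[R]_n) -> R) (gr : R -> (R -> 'rV[R]_n) -> 'rV[R]_n)
  (tau : R) (z y : R -> 'rV[R]_n) :
  ci_smooth h T psi dt gr -> 0 <= tau < T -> admissible h T z -> Lip h T tau z y ->
  psi tau y = psi tau z.
Proof.
have hh := h0; have hT := T0.
move=> [cpsi [cdiff _]] /andP[t0 tT] az hLip.
have [ay [yz [L hL]]] := hLip.
apply: (@right_lim_unique (fun s => psi s y) tau T) => //.
  move=> e e0.
  have [d d0 hd] := cpsi tau y ltac:(apply/andP; split; lra) ay e e0.
  exists d => // s /andP[ts sT] sd; apply: ltW.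
  apply: hd; first by apply/andP; split; lra.
    exact: ay.
  rewrite /dist supdist_self addr0 distrC ger0_norm; lra.
move=> e e0.
have [d5 d50 hd5] := cdiff tau z ltac:(apply/andP; split; lra) az y hLip 1 ltr01.
set a' := dt tau z; set g' := gr tau z.
set G := \sum_(i < n) `|g' ord0 i|.
have G0 : 0 <= G by apply: sumr_ge0.
set C := 1 + `|a'| + G * `|L|.
have C0 : 0 < C by rewrite /C; have := normr_ge0 a'; have := normr_ge0 L; nra.
have [r r0 hr] := small_pos [:: d5; e / C]
  ltac:(move=> d; rewrite !inE => /orP[/eqP->|/eqP->] //; exact: divr_gt0).
have r1 := hr d5 ltac:(by rewrite !inE eqxx).
have r2 := hr (e / C) ltac:(by rewrite !inE eqxx orbT).
exists r => // s /andP[ts sT] sr.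
have hP := hd5 s ltac:(by rewrite ts sT) (lt_trans sr r1).
have zt : z tau = y tau.
  symmetry; apply: yz; apply/andP; split; [lra | exact: lexx].
rewrite zt in hP.
have hI : `|inner g' (y s - y tau)| <= G * `|L| * (s - tau).
  apply: (le_trans (inner_le _ _)); rewrite -mulrA ler_wpM2l //.
  have := hL s tau ltac:(apply/andP; split; lra) ltac:(apply/andP; split; lra).
  rewrite ger0_norm; last lra.
  have := ler_norm L; have := enorm_ge0 (y s - y tau); nra.
have hA : `|a' * (s - tau)| = `|a'| * (s - tau) by rewrite normrM (ger0_norm (x := s - tau)) //; lra.
have hsC : (s - tau) * C < e by rewrite -ltr_pdivlMr //; lra.
have -> : psi s y - psi tau z = (psi s y - psi tau z - a' * (s - tau) - inner g' (y s - y tau))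
   + a' * (s - tau) + inner g' (y s - y tau) by ring.
apply: (le_trans (ler_normD _ _)); apply: (le_trans (lerD (ler_normD _ _) (lexx _))).
rewrite hA; move: hP hI hsC; rewrite /C; nra.
Qed.


Lemma z_adm (x y : R -> 'rV[R]_n) (tau : R) :
  admissible h T x -> admissible h T y -> - h <= tau <= T ->
  admissible h T (fun s => x s + (y (Num.min s tau) - x (Num.min s tau))).
Proof.
have hh := h0; have hT := T0.
move=> [xc xcont] [yc ycont] htau; split.
  move=> s /=.
  have e1 : forall w : R -> 'rV[R]_n, (forall s, w s = w (clamp h T s)) ->
      w (Num.min s tau) = w (Num.min (clamp h T s) tau).
    by move=> w wc; rewrite wc [RHS]wc; congr w; exact: clamp_min.
  by rewrite (xc s) (e1 _ yc) (e1 _ xc).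
move=> s hs e e0.
set m := Num.min s tau.
have hm : - h <= m <= T := min_in _ _ _ _ hs htau.
set N : R := n%:R.
have N0 : 0 <= N := ler0n _ _.
have D0 : 0 < 1 + N + 2 * N * N by nra.
set e1 := e / (1 + N + 2 * N * N).
have e10 : 0 < e1 by exact: divr_gt0.
have e1e : e1 * (1 + N + 2 * N * N) = e by rewrite /e1 mulfVK //; lra.
have [dx dx0 hdx] := xcont s hs e1 e10.
have [dy dy0 hdy] := ycont m hm e1 e10.
have [dx' dx'0 hdx'] := xcont m hm e1 e10.
have [d d0 hd] := small_pos [:: dx; dy; dx']
  ltac:(move=> d; rewrite !inE => /orP[/eqP->|/orP[/eqP->|/eqP->]] //).
have r1 := hd dx ltac:(by rewrite !inE eqxx).
have r2 := hd dy ltac:(by rewrite !inE eqxx orbT).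
have r3 := hd dx' ltac:(by rewrite !inE eqxx !orbT).
exists d => // s' hs' hss'.
set m' := Num.min s' tau.
have hm' : - h <= m' <= T := min_in _ _ _ _ hs' htau.
have hmm : `|m' - m| < d := le_lt_trans (minr_lip _ _ _) hss'.
rewrite /= zm1.
have A := hdx s' hs' (lt_trans hss' r1).
have B := hdy m' hm' (lt_trans hmm r2).
have C := hdx' m' hm' (lt_trans hmm r3).
have BC := enormB (y m' - y m) (x m' - x m).
apply: (le_lt_trans (enormD _ _)).
have := enorm_ge0 (x s' - x s); have := enorm_ge0 (y m' - y m);
have := enorm_ge0 (x m' - x m).
move: A B C BC e1e; rewrite -/N; nra.
Qed.


Lemma clamp0_in [a b : R] (xi : R) : a <= b -> a <= Num.max a (Num.min xi b) <= b.
Proof.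
move=> ab; rewrite maxEle minEle.
repeat match goal with |- context [if ?c then _ else _] =>
  lazymatch c with context [if _ then _ else _] => fail | _ =>
  let Hc := fresh "Hc" in
  case: (boolP c) => Hc; [idtac | move: Hc; rewrite -ltNge => Hc] end end.
all: apply/andP; split; lra.
Qed.

Variables (c : R) (H : R -> (R -> 'rV[R]_n) -> 'rV[R]_n -> R)
  (sigma : (R -> 'rV[R]_n) -> R) (phi : R -> (R -> 'rV[R]_n) -> R).
Hypotheses (hB1 : B1 h T H sigma) (hB3 : B3 h T H)
  (hmm : minimax_solution h T c H sigma phi).

Lemma Hcont_clamp (y : R -> 'rV[R]_n) (g : 'rV[R]_n) : admissible h T y ->
  continuous (fun xi => H (Num.max 0 (Num.min xi T)) y g).
Proof.
have hT := T0.
move=> ay; apply: cont_eps => xi0 e e0.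
have hc0 := clamp0_in xi0 (ltW hT).
have [d d0 hd] := hB1.1 _ y g hc0 ay e e0.
exists d => // xi hxi; apply: hd.
- exact: clamp0_in (ltW hT).
- exact: ay.
- rewrite /dist supdist_self addr0 subrr enorm0 addr0.
  apply: (le_lt_trans (maxr_lip _ _ _)); apply: (le_lt_trans (minr_lip _ _ _)).
  by rewrite distrC.
Qed.

Lemma H_na (t : R) (x y : R -> 'rV[R]_n) (g : 'rV[R]_n) : 0 <= t <= T ->
  admissible h T x -> admissible h T y -> (forall s, - h <= s <= t -> y s = x s) ->
  H t y g = H t x g.
Proof.
have hh := h0.
move=> ht ax ay yx.
set D := fun w : R -> 'rV[R]_n => w = x \/ w = y.
have cD : compactC h T D.
  split; first by move=> w [->|->].
  move=> I U _ cov.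
  have [ix hx] := cov x (or_introl erefl).
  have [iy hy] := cov y (or_intror erefl).
  exists [:: ix; iy] => w [->|->]; [exists ix | exists iy]; split => //=; tauto.
have [lam lam0 hlam] := hB3 _ cD.
have := hlam t y x g ht (or_intror erefl) (or_introl erefl).
have -> : maxdist_upto h y x t = 0.
  rewrite /maxdist_upto; apply: (sup_img0 (fun s => enorm (y s - x s))).
    by move: ht => /andP[? ?]; lra.
  by move=> s hs; rewrite yx // subrr enorm0.
rewrite mulr0 normr_le0 subr_eq0 => /eqP //.
Qed.


Lemma clamp_id (a b xi : R) : a <= xi <= b -> Num.max a (Num.min xi b) = xi.
Proof.
move=> /andP[h1 h2]; rewrite minEle maxEle.
repeat match goal with |- context [if ?c then _ else _] =>
  lazymatch c with context [if _ then _ else _] => fail | _ =>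
  let Hc := fresh "Hc" in
  case: (boolP c) => Hc; [idtac | move: Hc; rewrite -ltNge => Hc] end end.
all: lra.
Qed.

Lemma key (psi dt : R -> (R -> 'rV[R]_n) -> R) (gr : R -> (R -> 'rV[R]_n) -> 'rV[R]_n)
  (t : R) (x : R -> 'rV[R]_n) :
  ci_smooth h T psi dt gr -> 0 <= t < T -> admissible h T x ->
  forall e dl, 0 < e -> 0 < dl -> exists tau, exists z,
   [/\ 0 <= tau <= T, admissible h T z, dist h T t x tau z < dl, t < tau &
    `|(phi tau z - psi tau z) - (phi t x - psi t x) + (dt t x + H t x (gr t x)) * (tau - t)|
      <= e * (tau - t)].
Proof.
have hh := h0; have hT := T0.
move=> hpsi /andP[t0 tT] ax e dl e0 dl0.
have [naphi [_ [_ mm]]] := hmm.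
set g := gr t x; set a := dt t x.
have [y [hY heq]] := mm t x g ltac:(by rewrite t0 tT) ax.
have yLip : Lip h T t x y := hY.1.
have [ay [yx [L hL]]] := yLip.
have [_ [cdiff _]] := hpsi.
have e20 : 0 < e / 2 by lra.
have [d1 d10 hd1] := cdiff t x ltac:(by rewrite t0 tT) ax y yLip (e / 2) e20.
have [d2 d20 hd2] := hB1.1 t y g ltac:(by rewrite t0 (ltW tT)) ay (e / 2) e20.
set N : R := n%:R.
have N0 : 0 <= N := ler0n _ _.
set e1 := dl / (4 * (N + 1)).
have e10 : 0 < e1 by apply: divr_gt0 => //; lra.
have e1e : e1 * (4 * (N + 1)) = dl by rewrite /e1 mulfVK //; lra.
have htt : - h <= t <= T by apply/andP; split; lra.
have [d3 d30 hd3] := ax.2 t htt e1 e10.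
have [d4 d40 hd4] := ay.2 t htt e1 e10.
have [r r0 hr] := small_pos [:: d1; d2; d3; d4; dl / 2; T - t]
  ltac:(move=> d; rewrite !inE => /orP[/eqP->|/orP[/eqP->|/orP[/eqP->|/orP[/eqP->|/orP[/eqP->|/eqP->]]]]] //; lra).
have r1 := hr d1 ltac:(by rewrite !inE eqxx).
have r2 := hr d2 ltac:(by rewrite !inE eqxx !orbT).
have r3 := hr d3 ltac:(by rewrite !inE eqxx !orbT).
have r4 := hr d4 ltac:(by rewrite !inE eqxx !orbT).
have r5 := hr (dl / 2) ltac:(by rewrite !inE eqxx !orbT).
have r6 := hr (T - t) ltac:(by rewrite !inE eqxx !orbT).
set tau := t + r.
have tauE : tau = t + r by [].
set z := fun s => x s + (y (Num.min s tau) - x (Num.min s tau)).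
have htau : - h <= tau <= T by apply/andP; split; lra.
have az : admissible h T z := z_adm _ _ _ ax ay htau.
have zy : forall s, s <= tau -> z s = y s.
  by move=> s hs; rewrite /z min_eq // addrC subrK.
have ytx : y t = x t by apply: yx; rewrite lexx andbT; lra.
exists tau, z; split.
- apply/andP; split; lra.
- exact: az.
- have sd : supdist h T x z <= dl / 2.
    apply: sup_le_img; first lra.
    move=> s hs; rewrite /z opprD addrA subrr add0r enormN.
    have hm := min_in _ _ _ _ hs htau.
    case: (boolP (Num.min s tau <= t)) => hmt.
      rewrite yx ?subrr ?enorm0; first lra.
      by case/andP: hm => -> _.
    rewrite -ltNge in hmt.
    have hmtau := min_ge s tau.
    have hd : `|Num.min s tau - t| <= r by rewrite ger0_norm; lra.
    have A := hd3 _ hm (le_lt_trans hd r3).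
    have B := hd4 _ hm (le_lt_trans hd r4).
    have -> : y (Num.min s tau) - x (Num.min s tau) =
        (y (Num.min s tau) - y t) - (x (Num.min s tau) - x t).
      by rewrite ytx; apply/rowP => i; rewrite !mxE; ring.
    apply: (le_trans (enormB _ _)).
    move: A B e1e; nra.
  rewrite /dist /tau opprD addrA subrr add0r normrN gtr0_norm //; lra.
- lra.
have tauT : 0 <= tau < T by apply/andP; split; lra.
have pz : phi tau z = phi tau y.
  apply: naphi => //; by move=> s /andP[_ hs]; rewrite zy.
have qz : psi tau y = psi tau z.
  apply: (psi_na _ _ _ _ _ _ hpsi tauT az); split; first exact: ay.
  split; first by move=> s /andP[_ hs]; rewrite zy.
  by exists L => s1 s2 /andP[? ?] /andP[? ?]; apply: hL; apply/andP; split; lra.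
have E := heq tau ltac:(apply/andP; split; lra).
have P := hd1 tau ltac:(apply/andP; split; lra) ltac:(lra).
have Hxy : H t y g = H t x g by apply: H_na => //; apply/andP; split; lra.
have I : `|Rintegral (@lebesgue_measure R) [set xi | t <= xi <= tau] (fun xi => H xi y g)
           - H t y g * (tau - t)| <= e / 2 * (tau - t).
  rewrite (@eq_Rintegral _ _ _ (@lebesgue_measure R) _ (fun xi => H (Num.max 0 (Num.min xi T)) y g)); last first.
    by move=> xi; rewrite inE /= => /andP[? ?]; rewrite clamp_id //; apply/andP; split; lra.
  apply: int_bound; first lra.
    exact: Hcont_clamp.
  move=> xi /andP[? ?]; rewrite clamp_id; last by apply/andP; split; lra.
  apply: ltW; apply: hd2; first by apply/andP; split; lra.
    exact: ay.
  rewrite /dist supdist_self addr0 subrr enorm0 addr0 distrC ger0_norm; lra.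
rewrite pz -qz -Hxy.
apply: final_alg.
- exact: E.
- exact: P.
- exact: I.
Qed.

Lemma viscosity :
  (forall (psi dt_psi : R -> (R -> 'rV[R]_n) -> R)
          (grad_psi : R -> (R -> 'rV[R]_n) -> 'rV[R]_n) t x,
     ci_smooth h T psi dt_psi grad_psi ->
     0 <= t < T -> admissible h T x ->
     local_min_at h T (fun tau y => phi tau y - psi tau y) t x ->
     dt_psi t x + H t x (grad_psi t x) <= 0) /\
  (forall (psi dt_psi : R -> (R -> 'rV[R]_n) -> R)
          (grad_psi : R -> (R -> 'rV[R]_n) -> 'rV[R]_n) t x,
     ci_smooth h T psi dt_psi grad_psi ->
     0 <= t < T -> admissible h T x ->
     local_max_at h T (fun tau y => phi tau y - psi tau y) t x ->
     0 <= dt_psi t x + H t x (grad_psi t x)).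
Proof.
split.
  move=> psi dt gr t x hpsi ht ax [d0 d00 hmin].
  apply/ler_addgt0Pr => e e0.
  have [tau [z [htau az hdist ttau hb]]] := key _ _ _ _ _ hpsi ht ax _ _ e0 d00.
  have hm := hmin tau z htau az hdist.
  apply: (conclude_le _ _ _ _ _ _ hb).
    by rewrite subr_gt0.
  by rewrite subr_ge0.
move=> psi dt gr t x hpsi ht ax [d0 d00 hmax].
apply/ler_addgt0Pr => e e0.
have [tau [z [htau az hdist ttau hb]]] := key _ _ _ _ _ hpsi ht ax _ _ e0 d00.
have hm := hmax tau z htau az hdist.
apply: (conclude_ge _ _ _ _ _ _ hb).
  by rewrite subr_gt0.
by rewrite subr_le0.
Qed.

End Main.

Theorem proposition10 (R : realType) (n : nat) (h T c : R)
  (H : R -> (R -> 'rV[R]_n) -> 'rV[R]_n -> R)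
  (sigma : (R -> 'rV[R]_n) -> R)
  (phi : R -> (R -> 'rV[R]_n) -> R) :
  0 < h -> 0 < T -> 0 < c ->
  B1 h T H sigma -> B2 h T c H -> B3 h T H ->
  minimax_solution h T c H sigma phi ->
  (forall (psi dt_psi : R -> (R -> 'rV[R]_n) -> R)
          (grad_psi : R -> (R -> 'rV[R]_n) -> 'rV[R]_n) t x,
     ci_smooth h T psi dt_psi grad_psi ->
     0 <= t < T -> admissible h T x ->
     local_min_at h T (fun tau y => phi tau y - psi tau y) t x ->
     dt_psi t x + H t x (grad_psi t x) <= 0) /\
  (forall (psi dt_psi : R -> (R -> 'rV[R]_n) -> R)
          (grad_psi : R -> (R -> 'rV[R]_n) -> 'rV[R]_n) t x,
     ci_smooth h T psi dt_psi grad_psi ->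
     0 <= t < T -> admissible h T x ->
     local_max_at h T (fun tau y => phi tau y - psi tau y) t x ->
     0 <= dt_psi t x + H t x (grad_psi t x)).
Proof.
move=> h0 T0 _ hB1 _ hB3 hmm.
exact: (@viscosity R n h T h0 T0 c H sigma phi hB1 hB3 hmm).
Qed.
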